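(* Let $(H,B_1,B_2)$ be a Rota-Baxter system of Hopf algebras, $A$ a unital commutative algebra, and $\mathcal{B}_1,\mathcal{B}_2:\mathrm{Char}(H,A)\to\mathrm{Char}(H_{B_1,B_2},A)$ given by $\mathcal{B}_i(f)(a)=f(B_i(a))$, $a\in H_1$. The Cayley transform $\Theta:\operatorname{Im}(\mathcal{B}_1)/\mathcal{B}_1(\ker\mathcal{B}_2)\to\operatorname{Im}(\mathcal{B}_2)/\mathcal{B}_2(\ker\mathcal{B}_1)$, $\Theta(\overline{\mathcal{B}_1(f)})=\overline{\mathcal{B}_2(f)}$ for $f\in\mathrm{Char}(H,A)$, is a group isomorphism.
   Context: $\mathbb{F}$ is a field of characteristic $0$; Sweedler notation $\Delta(a)=a_1\otimes a_2$. A Rota-Baxter system of Hopf algebras is a triple $(H,B_1,B_2)$ with $(H,\cdot,1,\Delta,\epsilon,S)$ a cocommutative Hopf algebra, $B_1,B_2$ coalgebra homomorphisms with $B_1(1)=B_2(1)=1$, and for all $a,b\in H$: $B_1(a)B_1(b)=B_1(B_1(a_1)bS(B_2(a_2)))$, $B_2(a)B_2(b)=B_2(B_1(a_1)bS(B_2(a_2)))$. Descendent operation $a\circ b=B_1(a_1)bS(B_2(a_2))$, cocycle $\sigma(a)=B_1(a_1)S(B_2(a_2))$, $H_1=\operatorname{Im}(\sigma)$; $H_{B_1,B_2}$ is the Hopf algebra $H_1$ with product $\circ$, unit $1$, restricted $\Delta,\epsilon$, antipode $T(a)=S(B_1(a_1))B_2(a_2)$. Convolution: $(f\ast g)(a)=f(a_1)g(a_2)$.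 $\mathrm{Char}(H,A)$ is the group under $\ast$ of algebra homomorphisms $H\to A$; $\mathrm{Char}(H_{B_1,B_2},A)$ is the group under convolution (w.r.t. the coproduct of $H_1$) of algebra homomorphisms $(H_1,\circ,1)\to A$. The subgroups $\mathcal{B}_1(\ker\mathcal{B}_2)\trianglelefteq\operatorname{Im}(\mathcal{B}_1)$ and $\mathcal{B}_2(\ker\mathcal{B}_1)\trianglelefteq\operatorname{Im}(\mathcal{B}_2)$ are normal, and bars denote cosets. *)

(* Defs.v *)
From HB Require Import structures.
From mathcomp Require Import all_boot all_order all_algebra.
Set Implicit Arguments. Unset Strict Implicit. Unset Printing Implicit Defensive.
Import GRing.Theory.
Local Open Scope ring_scope.

Section Hopf.
Variables (F : fieldType) (H : algType F).

(* The coproduct Delta(a) is represented by a finite list of pairs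
   [(a1_i, a2_i)] standing for the tensor sum_i a1_i (x) a2_i in H (x) H.
   Such a representative is only relevant up to the universal property of
   the tensor product: every axiom / definition only uses Delta(a) through
   bilinear maps H -> H -> W. *)
Record hopf_data := HopfData {
  cop : H -> seq (H * H);
  cou : H -> F;
  ant : H -> H }.

Variable D : hopf_data.

(* Sweedler notation: sw a phi = phi(a_1, a_2) = sum phi a_1 a_2. *)
Definition sw (W : zmodType) (a : H) (phi : H -> H -> W) : W :=
  \sum_(p <- cop D a) phi p.1 p.2.

Definition lin (U V : lmodType F) (f : U -> V) : Prop :=
  forall (k : F) (x y : U), f (k *: x + y) = k *: f x + f y.

Definition bilin (W : lmodType F) (phi : H -> H -> W) : Prop :=
  (forall y, lin (fun x => phi x y)) /\ (forall x, lin (phi x)).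

Definition trilin (W : lmodType F) (phi : H -> H -> H -> W) : Prop :=
  (forall y z, lin (fun x => phi x y z)) /\ (forall x z, lin (fun y => phi x y z))
  /\ (forall x y, lin (phi x y)).

Definition cocomm_hopf : Prop :=
      (forall (W : lmodType F) (phi : H -> H -> W), bilin phi ->
         forall k a b, sw (k *: a + b) phi = k *: sw a phi + sw b phi) /\
      (forall k a b, cou D (k *: a + b) = k * cou D a + cou D b) /\
      lin (ant D) /\
      (forall (W : lmodType F) (phi : H -> H -> H -> W), trilin phi ->
         forall a, sw a (fun x y => sw x (fun x1 x2 => phi x1 x2 y))
                 = sw a (fun x y => sw y (fun y1 y2 => phi x y1 y2))) /\
      (forall a, sw a (fun x y => cou D x *: y) = a /\ sw a (fun x y => cou D y *: x) = a) /\
      (forall (W : lmodType F) (phi : H -> H -> W), bilin phi ->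
         (forall a b, sw (a * b) phi = sw a (fun x y => sw b (fun x' y' => phi (x * x') (y * y'))))
         /\ sw 1 phi = phi 1 1) /\
      ((forall a b, cou D (a * b) = cou D a * cou D b) /\ cou D 1 = 1) /\
      (forall a, sw a (fun x y => ant D x * y) = cou D a *: 1
              /\ sw a (fun x y => x * ant D y) = cou D a *: 1) /\
      (forall (W : lmodType F) (phi : H -> H -> W), bilin phi ->
         forall a, sw a phi = sw a (fun x y => phi y x)).

Definition coalg_hom (B : H -> H) : Prop :=
  [/\ lin B,
      (forall (W : lmodType F) (phi : H -> H -> W), bilin phi ->
         forall a, sw (B a) phi = sw a (fun x y => phi (B x) (B y))),
      (forall a, cou D (B a) = cou D a) & B 1 = 1].

Variables B1 B2 : H -> H.

Definition circ (a b : H) : H := sw a (fun x y => B1 x * b * ant D (B2 y)).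

Definition rb_system : Prop :=
  [/\ coalg_hom B1, coalg_hom B2,
      (forall a b, B1 a * B1 b = B1 (circ a b)) &
      (forall a b, B2 a * B2 b = B2 (circ a b))].

Definition sigma (a : H) : H := sw a (fun x y => B1 x * ant D (B2 y)).
Definition inH1 (x : H) : Prop := exists b, x = sigma b.

Variable A : comAlgType F.

Definition is_char (f : H -> A) : Prop :=
  [/\ lin f, (forall a b, f (a * b) = f a * f b) & f 1 = 1].

Definition conv (f g : H -> A) (a : H) : A := sw a (fun x y => f x * g y).

Definition conv_unit (a : H) : A := cou D a *: 1.

(* equality of maps as elements of Char(H_{B1,B2},A), i.e. on H1 *)
Definition eqH1 (x y : H -> A) : Prop := forall a, inH1 a -> x a = y a.

Definition calB (B : H -> H) (f : H -> A) : H -> A := fun a => f (B a).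

Definition in_ker_calB (B : H -> H) (f : H -> A) : Prop :=
  is_char f /\ eqH1 (calB B f) conv_unit.

(* x and y (elements of Im calB_i) lie in the same left coset of
   calB_i(ker calB_j):  x = y * calB_i(k) with k in ker calB_j *)
Definition same_coset (Bi Bj : H -> H) (x y : H -> A) : Prop :=
  exists k, in_ker_calB Bj k /\ eqH1 x (conv y (calB Bi k)).

End Hopf.

(* Main.v *)
Require Import Defs.
From HB Require Import structures.
From mathcomp Require Import all_boot all_order all_algebra.
From Stdlib Require Import FunctionalExtensionality.
Set Implicit Arguments. Unset Strict Implicit. Unset Printing Implicit Defensive.
Import GRing.Theory.
Local Open Scope ring_scope.

Section Lin.
Variable F : fieldType.

Lemma linP (U V : lmodType F) (f : U -> V) :
  (forall x y, f (x + y) = f x + f y) -> (forall k x, f (k *: x) = k *: f x) -> lin f.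
Proof. by move=> hD hZ k x y; rewrite hD hZ. Qed.

Section L.
Variables (U V : lmodType F) (f : U -> V).
Hypothesis Hf : lin f.
Lemma lin0 : f 0 = 0.
Proof.
have h := Hf 1 0 0; rewrite !scale1r addr0 in h.
by apply: (addrI (f 0)); rewrite addr0 -h.
Qed.
Lemma linD x y : f (x + y) = f x + f y.
Proof. by have := Hf 1 x y; rewrite !scale1r. Qed.
Lemma linZ k x : f (k *: x) = k *: f x.
Proof. by have := Hf k x 0; rewrite !addr0 lin0 addr0. Qed.
Lemma lin_sum I (r : seq I) (G : I -> U) :
  f (\sum_(i <- r) G i) = \sum_(i <- r) f (G i).
Proof. by elim: r => [|i r IH]; rewrite ?big_nil ?lin0 // !big_cons linD IH. Qed.
End L.

Lemma lin_sumF (U V : lmodType F) I (r : seq I) (G : I -> U -> V) :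
  (forall i, lin (G i)) -> lin (fun x => \sum_(i <- r) G i x).
Proof.
move=> HG; apply: linP => [x y|k x].
  by rewrite -big_split; apply: eq_bigr => i _; rewrite linD.
by rewrite scaler_sumr; apply: eq_bigr => i _; rewrite linZ.
Qed.

Lemma lin_comp (U V W : lmodType F) (f : V -> W) (g : U -> V) :
  lin f -> lin g -> lin (fun x => f (g x)).
Proof. by move=> hf hg k x y; rewrite hg hf. Qed.

Lemma lin_mulr (U : lmodType F) (W : algType F) (f : U -> W) (c : W) :
  lin f -> lin (fun x => f x * c).
Proof. by move=> hf k x y; rewrite hf mulrDl scalerAl. Qed.

Lemma lin_mull (U : lmodType F) (W : algType F) (f : U -> W) (c : W) :
  lin f -> lin (fun x => c * f x).
Proof. by move=> hf k x y; rewrite hf mulrDr scalerAr. Qed.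

Lemma lin_id (U : lmodType F) : lin (fun x : U => x).
Proof. by []. Qed.

Lemma bilin_mul (H : algType F) (W : algType F) (u v : H -> W) :
  lin u -> lin v -> bilin (fun x y => u x * v y).
Proof. by move=> hu hv; split=> y; [apply: lin_mulr | apply: lin_mull]. Qed.

End Lin.

Section Hopf2.
Variables (F : fieldType) (H : algType F) (D : hopf_data H).
Hypothesis HD : cocomm_hopf D.
Variable A : comAlgType F.

Local Notation sw := (sw D).
Local Notation eps := (cou D).
Local Notation S := (ant D).
Local Notation e := (conv_unit D A).
Local Notation conv := (conv D).

Lemma swL (W : lmodType F) (phi : H -> H -> W) : bilin phi ->
  lin (fun a => sw a phi).
Proof. by case: HD => h _ Hphi k a b; apply: h. Qed.
Lemma couL k a b : eps (k *: a + b) = k * eps a + eps b.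
Proof. by case: HD => _ [h _]. Qed.
Lemma antL : lin S.
Proof. by case: HD => _ [_ [h _]]. Qed.
Lemma coassoc (W : lmodType F) (phi : H -> H -> H -> W) : trilin phi -> forall a,
  sw a (fun x y => sw x (fun x1 x2 => phi x1 x2 y))
  = sw a (fun x y => sw y (fun y1 y2 => phi x y1 y2)).
Proof. by case: HD => _ [_ [_ [h _]]]; apply: h. Qed.
Lemma counitl a : sw a (fun x y => eps x *: y) = a.
Proof. by case: HD => _ [_ [_ [_ [h _]]]]; case: (h a). Qed.
Lemma counitr a : sw a (fun x y => eps y *: x) = a.
Proof. by case: HD => _ [_ [_ [_ [h _]]]]; case: (h a). Qed.
Lemma deltaM (W : lmodType F) (phi : H -> H -> W) : bilin phi -> forall a b,
  sw (a * b) phi = sw a (fun x y => sw b (fun x' y' => phi (x * x') (y * y'))).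
Proof. by case: HD => _ [_ [_ [_ [_ [h _]]]]] hp; case: (h W phi hp). Qed.
Lemma delta1 (W : lmodType F) (phi : H -> H -> W) : bilin phi -> sw 1 phi = phi 1 1.
Proof. by case: HD => _ [_ [_ [_ [_ [h _]]]]] hp; case: (h W phi hp). Qed.
Lemma couM a b : eps (a * b) = eps a * eps b.
Proof. by case: HD => _ [_ [_ [_ [_ [_ [[h _] _]]]]]]. Qed.
Lemma cou1 : eps 1 = 1.
Proof. by case: HD => _ [_ [_ [_ [_ [_ [[_ h] _]]]]]]. Qed.
Lemma antipl a : sw a (fun x y => S x * y) = eps a *: 1.
Proof. by case: HD => _ [_ [_ [_ [_ [_ [_ [h _]]]]]]]; case: (h a). Qed.
Lemma antipr a : sw a (fun x y => x * S y) = eps a *: 1.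
Proof. by case: HD => _ [_ [_ [_ [_ [_ [_ [h _]]]]]]]; case: (h a). Qed.
Lemma cocomm (W : lmodType F) (phi : H -> H -> W) : bilin phi ->
  forall a, sw a phi = sw a (fun x y => phi y x).
Proof. by case: HD => _ [_ [_ [_ [_ [_ [_ [_ h]]]]]]]; apply: h. Qed.

Lemma sw_ext (W : zmodType) a (phi psi : H -> H -> W) :
  (forall x y, phi x y = psi x y) -> sw a phi = sw a psi.
Proof. by move=> h; apply: eq_bigr => p _; apply: h. Qed.
Lemma sw_mulr (W : ringType) a (phi : H -> H -> W) c :
  sw a phi * c = sw a (fun x y => phi x y * c).
Proof. by rewrite /Defs.sw big_distrl. Qed.
Lemma sw_mull (W : ringType) a (phi : H -> H -> W) c :
  c * sw a phi = sw a (fun x y => c * phi x y).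
Proof. by rewrite /Defs.sw big_distrr. Qed.
Lemma sw_scale (W : lmodType F) a (phi : H -> H -> W) k :
  k *: sw a phi = sw a (fun x y => k *: phi x y).
Proof. by rewrite /Defs.sw scaler_sumr. Qed.
Lemma sw_exch (W : zmodType) a b (phi : H -> H -> H -> H -> W) :
  sw a (fun x y => sw b (fun x' y' => phi x y x' y'))
  = sw b (fun x' y' => sw a (fun x y => phi x y x' y')).
Proof. by rewrite /Defs.sw exchange_big. Qed.
Lemma lin_sw_app (V W : lmodType F) (f : V -> W) a (phi : H -> H -> V) :
  lin f -> f (sw a phi) = sw a (fun x y => f (phi x y)).
Proof. by move=> hf; rewrite /Defs.sw lin_sum. Qed.
Lemma lin_sw (U W : lmodType F) c (Phi : U -> H -> H -> W) :
  (forall y z, lin (fun x => Phi x y z)) -> lin (fun x => sw c (Phi x)).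
Proof. by move=> h; rewrite /Defs.sw; apply: lin_sumF => p; apply: h. Qed.

Lemma cou0 : eps 0 = 0.
Proof. have := couL 1 0 0; rewrite scale1r addr0 mul1r => h.
by apply: (addrI (eps 0)); rewrite addr0 -h. Qed.
Lemma couZ k x : eps (k *: x) = k * eps x.
Proof. by have := couL k x 0; rewrite !addr0 cou0 addr0. Qed.
Lemma couD x y : eps (x + y) = eps x + eps y.
Proof. by have := couL 1 x y; rewrite scale1r mul1r. Qed.
Lemma cou_sw a (phi : H -> H -> H) : eps (sw a phi) = sw a (fun x y => eps (phi x y)).
Proof.
rewrite /Defs.sw; elim: (cop D a) => [|p r IH]; first by rewrite !big_nil cou0.
by rewrite !big_cons couD IH.
Qed.


Section Conv.
Variables u v w : H -> A.
Hypotheses (hu : lin u) (hv : lin v) (hw : lin w).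

Lemma conv_lin : lin (conv u v).
Proof. exact: (swL (bilin_mul hu hv)). Qed.

Lemma conv_assoc a : conv (conv u v) w a = conv u (conv v w) a.
Proof.
rewrite /Defs.conv.
transitivity (sw a (fun x y => sw x (fun x1 x2 => u x1 * v x2 * w y))).
  by apply: sw_ext => x y; rewrite sw_mulr.
have Ht : trilin (fun x1 x2 y => u x1 * v x2 * w y).
  split; first by move=> y z; do 2 apply: lin_mulr.
  split; first by move=> x z; apply: lin_mulr; apply: lin_mull.
  by move=> x y; apply: lin_mull.
rewrite (coassoc Ht); apply: sw_ext => x y; rewrite sw_mull.
by apply: sw_ext => y1 y2; rewrite mulrA.
Qed.

Lemma conv_comm a : conv u v a = conv v u a.
Proof.
rewrite /Defs.conv (cocomm (bilin_mul hu hv)).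
by apply: sw_ext => x y; rewrite mulrC.
Qed.
End Conv.

Lemma e_lin : lin e.
Proof. by move=> k a b; rewrite /conv_unit couL scalerDl scalerA. Qed.
Lemma mul_e (z : A) x : z * e x = eps x *: z.
Proof. exact: mulr_algr. Qed.

Lemma conv_e_r (u : H -> A) a : lin u -> conv u e a = u a.
Proof.
move=> hu; rewrite /Defs.conv.
transitivity (sw a (fun x y => u (eps y *: x))).
  by apply: sw_ext => x y; rewrite mul_e linZ.
by rewrite -lin_sw_app // counitr.
Qed.
Lemma conv_e_l (u : H -> A) a : lin u -> conv e u a = u a.
Proof. by move=> hu; rewrite conv_comm ?conv_e_r //; apply: e_lin. Qed.

Lemma e_char : is_char e.
Proof.
split; first exact: e_lin.
  by move=> a b; rewrite /conv_unit couM -scalerA -scalerAl mul1r.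
by rewrite /conv_unit cou1 scale1r.
Qed.

Lemma conv_char (u v : H -> A) : is_char u -> is_char v -> is_char (conv u v).
Proof.
case=> hu mu u1 [hv mv v1]; split.
- exact: conv_lin.
- move=> a b; rewrite /Defs.conv (deltaM (bilin_mul hu hv)).
  rewrite sw_mulr; apply: sw_ext => x y; rewrite sw_mull; apply: sw_ext => x' y'.
  by rewrite mu mv mulrACA.
- by rewrite /Defs.conv (delta1 (bilin_mul hu hv)) u1 v1 mulr1.
Qed.

Lemma ant1 : S 1 = 1.
Proof.
have := antipl 1.
rewrite (delta1 (@bilin_mul _ H H S (fun x => x) antL (@lin_id _ H))).
by rewrite mulr1 cou1 scale1r.
Qed.

Lemma cou_ant x : eps (S x) = eps x.
Proof.
have h := congr1 eps (antipl x).
rewrite couZ cou1 mulr1 cou_sw in h.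
rewrite -{}h -{1}(counitr x) (lin_sw_app _ _ antL) cou_sw.
by apply: sw_ext => a b; rewrite (linZ antL) couZ couM mulrC.
Qed.

Lemma inv_r (g : H -> A) a : is_char g -> conv g (fun x => g (S x)) a = e a.
Proof.
case=> hg mg g1; rewrite /Defs.conv.
transitivity (g (sw a (fun x y => x * S y))).
  by rewrite (lin_sw_app _ _ hg); apply: sw_ext => x y; rewrite mg.
by rewrite antipr (linZ hg) g1.
Qed.
Lemma inv_l (g : H -> A) a : is_char g -> conv (fun x => g (S x)) g a = e a.
Proof.
case=> hg mg g1; rewrite /Defs.conv.
transitivity (g (sw a (fun x y => S x * y))).
  by rewrite (lin_sw_app _ _ hg); apply: sw_ext => x y; rewrite mg.
by rewrite antipl (linZ hg) g1.
Qed.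

Lemma conv_B B (u v : H -> A) a : coalg_hom D B -> lin u -> lin v ->
  conv u v (B a) = conv (fun x => u (B x)) (fun x => v (B x)) a.
Proof. by case=> _ hB _ _ hu hv; rewrite /Defs.conv (hB _ _ (bilin_mul hu hv)). Qed.

Definition cv2 (U V : H -> H -> A) a b :=
  sw a (fun x1 x2 => sw b (fun y1 y2 => U x1 y1 * V x2 y2)).
Definition E2 (x y : H) : A := e x * e y.

Lemma cv2_ext_r U V V' a b : (forall x y, V x y = V' x y) -> cv2 U V a b = cv2 U V' a b.
Proof. by move=> h; apply: sw_ext => ? ?; apply: sw_ext => ? ?; rewrite h. Qed.
Lemma cv2_ext_l U U' V a b : (forall x y, U x y = U' x y) -> cv2 U V a b = cv2 U' V a b.
Proof. by move=> h; apply: sw_ext => ? ?; apply: sw_ext => ? ?; rewrite h. Qed.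

Lemma cv2_unit_r U a b : bilin U -> cv2 U E2 a b = U a b.
Proof.
case=> hU1 hU2; rewrite /cv2.
transitivity (sw a (fun x1 x2 => eps x2 *: sw b (fun y1 y2 => eps y2 *: U x1 y1))).
  apply: sw_ext => x1 x2; rewrite sw_scale; apply: sw_ext => y1 y2.
  by rewrite /E2 mulrA !mul_e !scalerA mulrC.
transitivity (sw a (fun x1 x2 => eps x2 *: U x1 b)).
  apply: sw_ext => x1 x2; congr (_ *: _).
  rewrite -{2}(counitr b) (lin_sw_app _ _ (hU2 x1)).
  by apply: sw_ext => y1 y2; rewrite (linZ (hU2 x1)).
rewrite -{2}(counitr a) (lin_sw_app _ _ (hU1 b)).
by apply: sw_ext => y1 y2; rewrite (linZ (hU1 b)).
Qed.

Lemma cv2_unit_l U a b : bilin U -> cv2 E2 U a b = U a b.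
Proof.
case=> hU1 hU2; rewrite /cv2.
transitivity (sw a (fun x1 x2 => eps x1 *: sw b (fun y1 y2 => eps y1 *: U x2 y2))).
  apply: sw_ext => x1 x2; rewrite sw_scale; apply: sw_ext => y1 y2.
  by rewrite /E2 -mulrA /conv_unit !mulr_algl.
transitivity (sw a (fun x1 x2 => eps x1 *: U x2 b)).
  apply: sw_ext => x1 x2; congr (_ *: _).
  rewrite -{2}(counitl b) (lin_sw_app _ _ (hU2 x2)).
  by apply: sw_ext => y1 y2; rewrite (linZ (hU2 x2)).
rewrite -{2}(counitl a) (lin_sw_app _ _ (hU1 b)).
by apply: sw_ext => y1 y2; rewrite (linZ (hU1 b)).
Qed.

Lemma cv2_assoc U V W a b : bilin U -> bilin V -> bilin W ->
  cv2 (cv2 U V) W a b = cv2 U (cv2 V W) a b.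
Proof.
case=> hU1 hU2 [hV1 hV2] [hW1 hW2]; rewrite /cv2.
transitivity (sw a (fun x x' => sw x (fun x1 x2 => sw b (fun y y' =>
   sw y (fun y1 y2 => U x1 y1 * V x2 y2 * W x' y'))))).
  apply: sw_ext => x x'; rewrite [RHS]sw_exch; apply: sw_ext => y y'.
  by rewrite sw_mulr; apply: sw_ext => x1 x2; rewrite sw_mulr.
transitivity (sw a (fun x x' => sw x (fun x1 x2 => sw b (fun y1 y =>
   sw y (fun y2 y' => U x1 y1 * V x2 y2 * W x' y'))))).
  apply: sw_ext => x x'; apply: sw_ext => x1 x2.
  have Ht : trilin (fun y1 y2 y' => U x1 y1 * V x2 y2 * W x' y').
    split; first by move=> y z; do 2 apply: lin_mulr; apply: hU2.
    split; first by move=> x0 z; apply: lin_mulr; apply: lin_mull; apply: hV2.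
    by move=> x0 y; apply: lin_mull; apply: hW2.
  exact: (coassoc Ht).
have Ht : trilin (fun x1 x2 x' => sw b (fun y1 y =>
   sw y (fun y2 y' => U x1 y1 * V x2 y2 * W x' y'))).
  split.
    move=> y z; apply: lin_sw => y1 y0; apply: lin_sw => y2 y'.
    by do 2 apply: lin_mulr; apply: hU1.
  split.
    move=> x0 z; apply: lin_sw => y1 y0; apply: lin_sw => y2 y'.
    by apply: lin_mulr; apply: lin_mull; apply: hV1.
  move=> x0 y; apply: lin_sw => y1 y0; apply: lin_sw => y2 y'.
  by apply: lin_mull; apply: hW1.
rewrite (coassoc Ht); apply: sw_ext => x1 x.
rewrite sw_exch; apply: sw_ext => y1 y.
rewrite sw_mull; apply: sw_ext => x2 x'.
by rewrite sw_mull; apply: sw_ext => y2 y'; rewrite mulrA.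
Qed.

Lemma antichar (g : H -> A) : is_char g -> is_char (fun x => g (S x)).
Proof.
move=> Hg; case: (Hg) => hg mg g1.
have hgS : lin (fun x => g (S x)) := lin_comp hg antL.
split => //; last by rewrite ant1 g1.
move=> a b.
pose P := fun x y => g (S (x * y)).
pose R := fun x y => g (x * y).
pose Q := fun x y => g (S x) * g (S y).
have hP : bilin P.
  split=> y; apply: lin_comp => //; apply: lin_comp; try exact: antL.
    exact: lin_mulr.
  exact: lin_mull.
have hR : bilin R.
  by split=> y; apply: lin_comp => //; [apply: lin_mulr | apply: lin_mull].
have hQ : bilin Q by apply: bilin_mul.
have hPR : forall x y, cv2 P R x y = E2 x y.
  move=> x y; rewrite /cv2.
  transitivity (sw (x * y) (fun p q => g (S p) * g q)).
    by rewrite (deltaM (bilin_mul hgS hg)).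
  have := inv_l (x * y) Hg; rewrite /Defs.conv => ->.
  by case: e_char => _ -> _.
have hRQ : forall x y, cv2 R Q x y = E2 x y.
  move=> x y; rewrite /cv2.
  transitivity (conv g (fun z => g (S z)) x * conv g (fun z => g (S z)) y).
    rewrite /Defs.conv sw_mulr; apply: sw_ext => x1 x2; rewrite sw_mull.
    by apply: sw_ext => y1 y2; rewrite /R /Q mg mulrACA.
  by rewrite !inv_r.
transitivity (P a b); first by [].
transitivity (cv2 P E2 a b); first by rewrite cv2_unit_r.
transitivity (cv2 P (cv2 R Q) a b); first by apply: cv2_ext_r => x y; rewrite hRQ.
rewrite -cv2_assoc //.
transitivity (cv2 E2 Q a b); first by apply: cv2_ext_l => x y; rewrite hPR.
by rewrite cv2_unit_l.
Qed.

Lemma lin_B B (u : H -> A) : coalg_hom D B -> lin u -> lin (fun x => u (B x)).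
Proof. by case=> hB _ _ _ hu; apply: lin_comp. Qed.
Lemma e_B B x : coalg_hom D B -> e (B x) = e x.
Proof. by case=> _ _ hc _; rewrite /conv_unit hc. Qed.
Lemma convB_fun B (u v : H -> A) : coalg_hom D B -> lin u -> lin v ->
  (fun x => conv u v (B x)) = conv (fun x => u (B x)) (fun x => v (B x)).
Proof. by move=> hB hu hv; apply: functional_extensionality => x; apply: conv_B. Qed.

Lemma core Ba Bb (f g k : H -> A) : coalg_hom D Ba -> coalg_hom D Bb ->
  is_char f -> is_char g -> is_char k ->
  (forall a, k (Bb a) = e a) ->
  (forall a, f (Ba a) = conv (fun x => g (Ba x)) (fun x => k (Ba x)) a) ->
  exists m, is_char m /\ (forall a, m (Ba a) = e a) /\
    (forall a, f (Bb a) = conv (fun x => g (Bb x)) (fun x => m (Bb x)) a).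
Proof.
move=> hA hB Hf Hg Hk hk hf.
have Hgh := antichar Hg; have Hkh := antichar Hk.
case: (Hf) => lf _ _; case: (Hg) => lg _ _; case: (Hk) => lk _ _.
case: (Hgh) => lgh _ _; case: (Hkh) => lkh _ _.
set gh := fun x => g (S x) in Hgh lgh *; set kh := fun x => k (S x) in Hkh lkh *.
exists (conv (conv gh f) kh); split.
  by apply: conv_char => //; apply: conv_char.
have lghf : lin (conv gh f) by apply: conv_lin.
split.
- move=> a; rewrite conv_B // (convB_fun hA lgh lf).
  have -> : (fun x => f (Ba x)) = conv (fun x => g (Ba x)) (fun x => k (Ba x)).
    exact: functional_extensionality.
  have -> : conv (fun x => gh (Ba x)) (conv (fun x => g (Ba x)) (fun x => k (Ba x)))
            = (fun x => k (Ba x)).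
    apply: functional_extensionality => x.
    rewrite -conv_assoc; try apply: lin_B => //.
    rewrite -(convB_fun hA lgh lg).
    have -> : (fun x => conv gh g (Ba x)) = e.
      by apply: functional_extensionality => y; rewrite inv_l // e_B.
    by rewrite conv_e_l //; apply: lin_B.
  by rewrite -conv_B // inv_r // e_B.
- move=> a.
  have -> : (fun x => conv (conv gh f) kh (Bb x))
            = conv (fun x => gh (Bb x)) (fun x => f (Bb x)).
    apply: functional_extensionality => x.
    rewrite conv_B // (convB_fun hB lgh lf).
    have -> : (fun x => kh (Bb x)) = e.
      apply: functional_extensionality => y.
      rewrite -(conv_e_r _ (lin_B hB lkh)).
      have <- : (fun x => k (Bb x)) = e by apply: functional_extensionality.
      by rewrite -conv_B // inv_l // e_B.
    by rewrite conv_e_r //; apply: conv_lin; apply: lin_B.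
  rewrite -conv_assoc; try apply: lin_B => //.
  rewrite -(convB_fun hB lg lgh).
  have -> : (fun x => conv g gh (Bb x)) = e.
    by apply: functional_extensionality => y; rewrite inv_r // e_B.
  by rewrite conv_e_l //; apply: lin_B.
Qed.


Section RB.
Variables B1 B2 : H -> H.
Hypothesis Hrb : rb_system D B1 B2.
Local Notation sg := (sigma D B1 B2).

Lemma B_sigma : (forall a, B1 (sg a) = B1 a) /\ (forall a, B2 (sg a) = B2 a).
Proof.
case: Hrb => h1 h2 c1 c2.
have hs : forall a, circ D B1 B2 a 1 = sg a.
  by move=> a; apply: sw_ext => x y; rewrite mulr1.
split=> a; rewrite -hs; [rewrite -c1; case: h1 | rewrite -c2; case: h2] => _ _ _ ->;
  by rewrite mulr1.
Qed.

Lemma cou_sigma a : eps (sg a) = eps a.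
Proof.
case: Hrb => [[_ _ c1 _] [_ _ c2 _] _ _].
rewrite /sigma cou_sw.
transitivity (sw a (fun x y => eps (eps y *: x))).
  by apply: sw_ext => x y; rewrite couM cou_ant c1 c2 couZ mulrC.
by rewrite -cou_sw counitr.
Qed.

Lemma T1 B (u v w : H -> A) : coalg_hom D B -> (forall a, B (sg a) = B a) ->
  lin v -> lin w ->
  eqH1 D B1 B2 (calB B u) (conv (calB B v) (calB B w)) <->
  (forall a, u (B a) = conv (fun x => v (B x)) (fun x => w (B x)) a).
Proof.
move=> hB hs lv lw; split.
  move=> h a; have := h (sg a) (ex_intro _ a erefl).
  rewrite /calB hs => ->.
  by rewrite -(conv_B (sg a) hB lv lw) hs (conv_B a hB lv lw).
move=> h x [b ->]; rewrite /calB hs h.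
by rewrite -(conv_B (sg b) hB lv lw) hs (conv_B b hB lv lw).
Qed.

Lemma T2 B (k : H -> A) : (forall a, B (sg a) = B a) ->
  eqH1 D B1 B2 (calB B k) e <-> (forall a, k (B a) = e a).
Proof.
move=> hs; split.
  move=> h a; have := h (sg a) (ex_intro _ a erefl).
  by rewrite /calB hs => ->; rewrite /conv_unit cou_sigma.
by move=> h x [b ->]; rewrite /calB hs h /conv_unit cou_sigma.
Qed.

End RB.
End Hopf2.

Theorem mainTheorem13 (F : fieldType) (H : algType F) (D : hopf_data H)
    (B1 B2 : H -> H) (A : comAlgType F) :
  [pchar F] =i pred0 ->
  cocomm_hopf D ->
  rb_system D B1 B2 ->
  (forall f g : H -> A, is_char f -> is_char g ->
     same_coset D B1 B2 B1 B2 (calB B1 f) (calB B1 g)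
     <-> same_coset D B1 B2 B2 B1 (calB B2 f) (calB B2 g)) /\
  (forall f g h : H -> A, is_char f -> is_char g -> is_char h ->
     eqH1 D B1 B2 (calB B1 h) (conv D (calB B1 f) (calB B1 g)) ->
     same_coset D B1 B2 B2 B1 (calB B2 h) (conv D (calB B2 f) (calB B2 g))).
Proof.
move=> _ HD Hrb.
have [hs1 hs2] := B_sigma Hrb.
have [h1 h2 _ _] := Hrb.
split.
  move=> f g Hf Hg; case: (Hf) => lf _ _; case: (Hg) => lg _ _; split.
    case=> k [[Hk hker] heq]; case: (Hk) => lk _ _.
    have hker' := (T2 HD Hrb k hs2).1 hker.
    have heq' := (T1 f h1 hs1 lg lk).1 heq.
    have [m [Hm [hm1 hm2]]] := core HD h1 h2 Hf Hg Hk hker' heq'.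
    case: (Hm) => lm _ _.
    exists m; split; first by split => //; apply/(T2 HD Hrb m hs1).
    by apply/(T1 f h2 hs2 lg lm).
  case=> k [[Hk hker] heq]; case: (Hk) => lk _ _.
  have hker' := (T2 HD Hrb k hs1).1 hker.
  have heq' := (T1 f h2 hs2 lg lk).1 heq.
  have [m [Hm [hm1 hm2]]] := core HD h2 h1 Hf Hg Hk hker' heq'.
  case: (Hm) => lm _ _.
  exists m; split; first by split => //; apply/(T2 HD Hrb m hs2).
  by apply/(T1 f h1 hs1 lg lm).
move=> f g h Hf Hg Hh heq.
case: (Hf) => lf _ _; case: (Hg) => lg _ _.
have Hfg := conv_char HD Hf Hg; case: (Hfg) => lfg _ _.
have E1 : conv D (calB B1 f) (calB B1 g) = calB B1 (conv D f g).
  by apply: functional_extensionality => x; rewrite /calB (conv_B x h1 lf lg).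
have E2 : conv D (calB B2 f) (calB B2 g) = calB B2 (conv D f g).
  by apply: functional_extensionality => x; rewrite /calB (conv_B x h2 lf lg).
have He := e_char HD A; case: (He) => le _ _.
have heq' : forall a, h (B1 a) = conv D (fun x => conv D f g (B1 x))
                                  (fun x => conv_unit D A (B1 x)) a.
  move=> a; have := heq (sigma D B1 B2 a) (ex_intro _ a erefl).
  rewrite /calB hs1 => ->.
  rewrite -(conv_B (sigma D B1 B2 a) h1 lf lg) hs1.
  have -> : (fun x => conv_unit D A (B1 x)) = conv_unit D A.
    by apply: functional_extensionality => x; rewrite (e_B A x h1).
  by rewrite (conv_e_r HD a (lin_B h1 lfg)).
have hk : forall a, conv_unit D A (B2 a) = conv_unit D A a.
  by move=> a; rewrite (e_B A a h2).
have [m [Hm [hm1 hm2]]] := core HD h1 h2 Hh Hfg He hk heq'.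
case: (Hm) => lm _ _.
exists m; split; first by split => //; apply/(T2 HD Hrb m hs1).
by rewrite E2; apply/(T1 h h2 hs2 lfg lm).
Qed.
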